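(* Consider the eigenvalue problem $-u^{(6)}(x)=\lambda u(x)$ on $[0,1]$ with $u(0)=u'(0)=u''(0)=0$, $u(1)=u'(1)=u''(1)=0$. Its eigenvalues, in increasing order, are $\{\lambda_{n,3}\}_{n=2}^\infty=\{\mu_{n,3}^6\}_{n=2}^\infty$, where $\mu_{n,3}=n\pi$ if $n$ is even, and $\mu_{3,3}<\mu_{5,3}<\mu_{7,3}<\cdots$ are the positive solutions $\mu$ of the equation $$\cos\frac{\mu}{2}=\frac{4\cosh\frac{\mu\sqrt3}{2}}{\cosh(\mu\sqrt3)}+\frac{1}{\cosh(\mu\sqrt3)}\Big[\cos\frac{\mu}{2}\cos\mu-4\cos\frac{\mu}{2}\Big].$$ *)

(* Defs.v *)
From Stdlib Require Import Reals Lra.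
From Coquelicot Require Import Coquelicot.
Open Scope R_scope.

(* u is an eigenfunction of  -u^(6) = lam u  on [0,1] with
   u(0)=u'(0)=u''(0)=0 = u(1)=u'(1)=u''(1).
   u is taken 6 times differentiable on R (every solution of the ODE on [0,1]
   is a combination of exponentials, hence extends), the ODE holds on [0,1],
   and u is not identically zero on [0,1]. *)
Definition is_eigenfunction6 (lam : R) (u : R -> R) : Prop :=
  (forall k x, (k <= 6)%nat -> ex_derive_n u k x) /\
  (forall x, 0 <= x <= 1 -> - Derive_n u 6 x = lam * u x) /\
  (forall k, (k <= 2)%nat -> Derive_n u k 0 = 0 /\ Derive_n u k 1 = 0) /\
  (exists x, 0 <= x <= 1 /\ u x <> 0).

Definition is_eigenvalue6 (lam : R) : Prop :=
  exists u : R -> R, is_eigenfunction6 lam u.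

Definition odd_eq (mu : R) : Prop :=
  cos (mu / 2) =
    4 * cosh (mu * sqrt 3 / 2) / cosh (mu * sqrt 3)
    + / cosh (mu * sqrt 3) * (cos (mu / 2) * cos mu - 4 * cos (mu / 2)).

(* Main.v *)
Require Import Defs.
From Stdlib Require Import Reals Lra Lia Nsatz ZArith Classical.
From Coquelicot Require Import Coquelicot.
Open Scope R_scope.

Definition Ef (a b P Q x : R) := exp (a*x) * (P * cos (b*x) + Q * sin (b*x)).

Record prm := mkP {p1:R; q1:R; p2:R; q2:R; p3:R; q3:R}.
Definition s3 := sqrt 3.
Lemma s3s3 : s3 * s3 = 3.
Proof. unfold s3. apply sqrt_sqrt. lra. Qed.
Lemma s3_pos : 0 < s3.
Proof. unfold s3. apply sqrt_lt_R0. lra. Qed.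

Definition stepP (m:R) (p:prm) : prm :=
  let a := s3*m/2 in let b := m/2 in
  mkP (m*q1 p) (-(m*p1 p)) (a*p2 p + b*q2 p) (a*q2 p - b*p2 p)
      ((-a)*p3 p + b*q3 p) ((-a)*q3 p - b*p3 p).
Definition U m p t := Ef 0 m (p1 p) (q1 p) t + Ef (s3*m/2) (m/2) (p2 p) (q2 p) t
   + Ef (-(s3*m/2)) (m/2) (p3 p) (q3 p) t.

Lemma U_deriv m p t : is_derive (U m p) t (U m (stepP m p) t).
Proof.
  unfold U, Ef, stepP; simpl. auto_derive; [repeat split|]. ring.
Qed.

Lemma U_deriv_sh m p c t : is_derive (fun x => U m p (x - c)) t (U m (stepP m p) (t - c)).
Proof.
  unfold U, Ef, stepP; simpl. auto_derive; [repeat split|]. unfold Rminus; ring.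
Qed.

Definition iterP m k p := Nat.iter k (stepP m) p.

Lemma family_Derive_n (F : nat -> R -> R) :
  (forall k x, is_derive (F k) x (F (S k) x)) ->
  forall k x, Derive_n (F O) k x = F k x /\ ex_derive_n (F O) k x.
Proof.
  intros HF k. induction k as [|k IH]; intros x.
  - simpl. split; auto.
  - split.
    + simpl. rewrite (Derive_ext _ (F k)). 2:{ intros; apply IH. }
      apply is_derive_unique. apply HF.
    + simpl. apply ex_derive_ext with (F k). { intros; symmetry; apply IH. }
      eexists. apply HF.
Qed.

Definition scaleP (c:R) (p:prm) := mkP (c*p1 p) (c*q1 p) (c*p2 p) (c*q2 p) (c*p3 p) (c*q3 p).


Lemma iterP6 m p : iterP m 6 p = scaleP (-(m*m*m*m*m*m)) p.
Proof.
  destruct p as [a1 b1 a2 b2 a3 b3]. unfold iterP, scaleP. simpl. unfold stepP. simpl.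
  unfold Rdiv. set (i := /2). assert (Hi : 2*i = 1) by (unfold i; field).
  assert (Hs := s3s3).
  f_equal; nsatz.
Qed.

Lemma mvt (f df : R -> R) a b : a < b ->
  (forall x, a <= x <= b -> is_derive f x (df x)) ->
  exists c, a < c < b /\ f b - f a = df c * (b - a).
Proof.
  intros Hab Hd. destruct (MVT_cor2 f df a b Hab) as [c [Hc1 Hc2]].
  - intros c Hc. apply is_derive_Reals. now apply Hd.
  - exists c; split; auto.
Qed.

Lemma mono_up (f df : R -> R) a b :
  (forall x, a <= x <= b -> is_derive f x (df x)) ->
  (forall x, a <= x <= b -> 0 <= df x) ->
  forall x y, a <= x -> x <= y -> y <= b -> f x <= f y.
Proof.
  intros Hd Hp x y Hx Hxy Hy. destruct (Rle_lt_or_eq_dec _ _ Hxy) as [Hl|He].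
  - destruct (mvt f df x y Hl) as [c [Hc Hc2]].
    + intros z Hz. apply Hd. lra.
    + assert (0 <= df c) by (apply Hp; lra). nra.
  - subst; lra.
Qed.

Lemma mono_down (f df : R -> R) a b :
  (forall x, a <= x <= b -> is_derive f x (df x)) ->
  (forall x, a <= x <= b -> df x <= 0) ->
  forall x y, a <= x -> x <= y -> y <= b -> f y <= f x.
Proof.
  intros Hd Hp x y Hx Hxy Hy.
  assert (H := mono_up (fun z => - f z) (fun z => - df z) a b).
  assert (- f x <= - f y). { apply H; auto. intros z Hz. apply (is_derive_opp f). apply Hd; auto.
    intros z Hz; specialize (Hp z Hz); lra. }
  lra.
Qed.

Lemma locally_interval (P : R -> Prop) x a b : a < x < b ->
  (forall y, a < y < b -> P y) -> locally x P.
Proof.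
  intros Hx HP.
  assert (He : 0 < Rmin (x - a) (b - x)) by (apply Rmin_pos; lra).
  exists (mkposreal _ He). intros y Hy. apply HP.
  change (Rabs (y - x) < Rmin (x - a) (b - x)) in Hy.
  apply Rabs_lt_between' in Hy.
  destruct Hy as [H1 H2].
  assert (Rmin (x - a) (b - x) <= x - a) by apply Rmin_l.
  assert (Rmin (x - a) (b - x) <= b - x) by apply Rmin_r.
  lra.
Qed.

Lemma eig_deriv lam u : is_eigenfunction6 lam u ->
  forall k x, (k <= 5)%nat -> is_derive (Derive_n u k) x (Derive_n u (S k) x).
Proof.
  intros [Hd _] k x Hk. assert (H := Hd (S k) x ltac:(lia)). simpl in H.
  simpl. apply Derive_correct. exact H.
Qed.

Lemma zero_from_deriv0 (f df : R -> R) :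
  (forall x, 0 <= x <= 1 -> is_derive f x (df x)) ->
  (forall x, 0 < x < 1 -> df x = 0) -> f 0 = 0 ->
  forall x, 0 <= x <= 1 -> f x = 0.
Proof.
  intros Hd H0 Hf x Hx. destruct (Rle_lt_or_eq_dec 0 x ltac:(lra)) as [Hl|He].
  - destruct (mvt f df 0 x Hl) as [c [Hc Hc2]].
    + intros z Hz; apply Hd; lra.
    + rewrite H0 in Hc2 by lra. lra.
  - subst; auto.
Qed.

Lemma is_derive_eq (f : R -> R) (x l l' : R) : is_derive f x l -> l = l' -> is_derive f x l'.
Proof. intros H ->; exact H. Qed.

Lemma lam_pos lam u : is_eigenfunction6 lam u -> 0 < lam.
Proof.
  intros He. destruct (Rlt_or_le 0 lam) as [Hl|Hl]; auto. exfalso.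
  assert (HD := eig_deriv lam u He).
  destruct He as [_ [Hode [Hbc [x0 [Hx0 Hu0]]]]].
  set (D := Derive_n u).
  set (F := fun x => D 5%nat x * D 0%nat x - D 4%nat x * D 1%nat x + D 3%nat x * D 2%nat x).
  assert (HF : forall x, is_derive F x (D 6%nat x * D 0%nat x + D 3%nat x * D 3%nat x)).
  { intros x. unfold F.
    assert (H0 := HD 0%nat x ltac:(lia)). assert (H1 := HD 1%nat x ltac:(lia)).
    assert (H2 := HD 2%nat x ltac:(lia)). assert (H3 := HD 3%nat x ltac:(lia)).
    assert (H4 := HD 4%nat x ltac:(lia)). assert (H5 := HD 5%nat x ltac:(lia)).
    fold D in H0,H1,H2,H3,H4,H5.
    eapply is_derive_eq.
    { apply (is_derive_plus (fun x => D 5%nat x * D 0%nat x - D 4%nat x * D 1%nat x)).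
      apply (is_derive_minus (fun x => D 5%nat x * D 0%nat x)).
      apply (is_derive_mult (D 5%nat)); [exact H5|exact H0|intros; apply Rmult_comm].
      apply (is_derive_mult (D 4%nat)); [exact H4|exact H1|intros; apply Rmult_comm].
      apply (is_derive_mult (D 3%nat)); [exact H3|exact H2|intros; apply Rmult_comm]. }
    unfold minus, plus, opp, mult; simpl; ring. }
  assert (HF0 : F 0 = 0).
  { unfold F, D. destruct (Hbc 0%nat ltac:(lia)) as [A _]. destruct (Hbc 1%nat ltac:(lia)) as [B _].
    destruct (Hbc 2%nat ltac:(lia)) as [C _]. rewrite A, B, C. ring. }
  assert (HF1 : F 1 = 0).
  { unfold F, D. destruct (Hbc 0%nat ltac:(lia)) as [_ A]. destruct (Hbc 1%nat ltac:(lia)) as [_ B].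
    destruct (Hbc 2%nat ltac:(lia)) as [_ C]. rewrite A, B, C. ring. }
  assert (Hpos : forall x, 0 <= x <= 1 -> 0 <= D 6%nat x * D 0%nat x + D 3%nat x * D 3%nat x).
  { intros x Hx. assert (E := Hode x Hx). unfold D. 
    replace (Derive_n u 6 x) with (- (lam * u x)) by lra. simpl (Derive_n u 0).
    assert (0 <= Derive_n u 3 x * Derive_n u 3 x) by apply Rle_0_sqr.
    assert (0 <= u x * u x) by apply Rle_0_sqr. nra. }
  assert (HFz : forall x, 0 <= x <= 1 -> F x = 0).
  { intros x Hx.
    assert (A := mono_up F _ 0 1 (fun x _ => HF x) Hpos 0 x ltac:(lra) ltac:(lra) ltac:(lra)).
    assert (B := mono_up F _ 0 1 (fun x _ => HF x) Hpos x 1 ltac:(lra) ltac:(lra) ltac:(lra)).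
    lra. }
  assert (H3z : forall x, 0 < x < 1 -> D 3%nat x = 0).
  { intros x Hx.
    assert (Hd0 : is_derive F x 0).
    { apply (is_derive_ext_loc (fun _ => 0)).
      - apply (locally_interval _ x 0 1 Hx). intros y Hy. symmetry. apply HFz. lra.
      - apply (is_derive_const 0). }
    assert (E := is_derive_unique _ _ _ (HF x)). rewrite (is_derive_unique _ _ _ Hd0) in E.
    assert (Eo := Hode x ltac:(lra)). unfold D in E. 
    replace (Derive_n u 6 x) with (- (lam * u x)) in E by lra. simpl (Derive_n u 0) in E.
    assert (0 <= Derive_n u 3 x * Derive_n u 3 x) by apply Rle_0_sqr.
    assert (0 <= u x * u x) by apply Rle_0_sqr.
    assert (Derive_n u 3 x * Derive_n u 3 x = 0) by nra.
    unfold D. nra. }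
  assert (H2z : forall x, 0 <= x <= 1 -> D 2%nat x = 0).
  { apply (zero_from_deriv0 _ (D 3%nat)).
    - intros; apply HD; lia.
    - exact H3z.
    - apply Hbc; lia. }
  assert (H1z : forall x, 0 <= x <= 1 -> D 1%nat x = 0).
  { apply (zero_from_deriv0 _ (D 2%nat)).
    - intros; apply HD; lia.
    - intros; apply H2z; lra.
    - apply Hbc; lia. }
  assert (H0z : forall x, 0 <= x <= 1 -> D 0%nat x = 0).
  { apply (zero_from_deriv0 _ (D 1%nat)).
    - intros; apply HD; lia.
    - intros; apply H1z; lra.
    - apply Hbc; lia. }
  apply Hu0. apply (H0z x0 Hx0).
Qed.

Lemma dplus (f g : R -> R) (x a b : R) : is_derive f x a -> is_derive g x b ->
  is_derive (fun x => f x + g x) x (a + b).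
Proof. intros. apply (is_derive_plus f g); auto. Qed.
Lemma dmult (f g : R -> R) (x a b : R) : is_derive f x a -> is_derive g x b ->
  is_derive (fun x => f x * g x) x (a * g x + f x * b).
Proof. intros. apply (is_derive_mult f g); auto. intros; apply Rmult_comm. Qed.
Lemma dsq (f : R -> R) (x a : R) : is_derive f x a -> is_derive (fun x => f x * f x) x (2 * f x * a).
Proof. intros. apply (is_derive_eq _ _ (a * f x + f x * a)). apply dmult; auto. ring. Qed.

Lemma energy (Y : nat -> R -> R) (c : R) :
 (forall k x, (k <= 5)%nat -> is_derive (Y k) x (Y (S k) x)) ->
 (forall x, 0 <= x <= 1 -> Y 6%nat x = c * Y 0%nat x) ->
 (forall k, (k <= 5)%nat -> Y k (1/2) = 0) ->
 forall x, 0 <= x <= 1 -> forall k, (k <= 5)%nat -> Y k x = 0.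
Proof.
  intros HD Hode H0.
  set (E := fun x => Y 0%nat x * Y 0%nat x + Y 1%nat x * Y 1%nat x + Y 2%nat x * Y 2%nat x
     + Y 3%nat x * Y 3%nat x + Y 4%nat x * Y 4%nat x + Y 5%nat x * Y 5%nat x).
  set (dE := fun x => 2 * (Y 0%nat x * Y 1%nat x + Y 1%nat x * Y 2%nat x + Y 2%nat x * Y 3%nat x
     + Y 3%nat x * Y 4%nat x + Y 4%nat x * Y 5%nat x + Y 5%nat x * Y 6%nat x)).
  assert (HE : forall x, is_derive E x (dE x)).
  { intros x. unfold E, dE.
    assert (A0 := HD 0%nat x ltac:(lia)). assert (A1 := HD 1%nat x ltac:(lia)).
    assert (A2 := HD 2%nat x ltac:(lia)). assert (A3 := HD 3%nat x ltac:(lia)).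
    assert (A4 := HD 4%nat x ltac:(lia)). assert (A5 := HD 5%nat x ltac:(lia)).
    eapply is_derive_eq.
    { apply dplus; [apply dplus; [apply dplus; [apply dplus; [apply dplus|]|]|]|]; apply dsq; eassumption. }
    ring. }
  set (K := 2 + c * c).
  assert (HEpos : forall x, 0 <= E x).
  { intros x; unfold E.
    repeat apply Rplus_le_le_0_compat; apply Rle_0_sqr. }
  assert (Hbound : forall x, 0 <= x <= 1 -> - (K * E x) <= dE x <= K * E x).
  { intros x Hx. unfold dE, E, K. rewrite (Hode x Hx).
    set (y0 := Y 0%nat x). set (y1 := Y 1%nat x). set (y2 := Y 2%nat x).
    set (y3 := Y 3%nat x). set (y4 := Y 4%nat x). set (y5 := Y 5%nat x).
    assert (Q1 : (2 + c*c) * (y0*y0+y1*y1+y2*y2+y3*y3+y4*y4+y5*y5) - 2*(y0*y1+y1*y2+y2*y3+y3*y4+y4*y5+y5*(c*y0))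
      = (y0-y1)*(y0-y1) + (y1-y2)*(y1-y2) + (y2-y3)*(y2-y3) + (y3-y4)*(y3-y4) + (y4-y5)*(y4-y5)
        + (c*y0-y5)*(c*y0-y5) + y0*y0 + (c*y1)*(c*y1) + (c*y2)*(c*y2) + (c*y3)*(c*y3) + (c*y4)*(c*y4) + (c*y5)*(c*y5)) by ring.
    assert (Q2 : (2 + c*c) * (y0*y0+y1*y1+y2*y2+y3*y3+y4*y4+y5*y5) + 2*(y0*y1+y1*y2+y2*y3+y3*y4+y4*y5+y5*(c*y0))
      = (y0+y1)*(y0+y1) + (y1+y2)*(y1+y2) + (y2+y3)*(y2+y3) + (y3+y4)*(y3+y4) + (y4+y5)*(y4+y5)
        + (c*y0+y5)*(c*y0+y5) + y0*y0 + (c*y1)*(c*y1) + (c*y2)*(c*y2) + (c*y3)*(c*y3) + (c*y4)*(c*y4) + (c*y5)*(c*y5)) by ring.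
    assert (T := fun z => Rle_0_sqr z). unfold Rsqr in T.
    assert (S1 := T (y0-y1)). assert (S2 := T (y1-y2)). assert (S3 := T (y2-y3)). assert (S4 := T (y3-y4)).
    assert (S5 := T (y4-y5)). assert (S6 := T (c*y0-y5)). assert (S7 := T y0). assert (S8 := T (c*y1)).
    assert (S9 := T (c*y2)). assert (S10 := T (c*y3)). assert (S11 := T (c*y4)). assert (S12 := T (c*y5)).
    assert (R1 := T (y0+y1)). assert (R2 := T (y1+y2)). assert (R3 := T (y2+y3)). assert (R4 := T (y3+y4)).
    assert (R5 := T (y4+y5)). assert (R6 := T (c*y0+y5)).
    split; lra. }
  assert (HE12 : E (1/2) = 0).
  { unfold E. rewrite !H0 by lia. ring. }
  assert (HEz : forall x, 0 <= x <= 1 -> E x = 0).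
  { intros x Hx. destruct (Rle_lt_dec (1/2) x) as [Hl|Hl].
    - set (G := fun x => E x * exp (- K * x)).
      assert (HG : forall z, 1/2 <= z <= 1 -> is_derive G z ((dE z - K * E z) * exp (- K * z))).
      { intros z Hz. unfold G. eapply is_derive_eq.
        { apply (dmult E (fun z => exp (- K * z))). apply HE.
          auto_derive; auto. }
        ring. }
      assert (Hn : forall z, 1/2 <= z <= 1 -> (dE z - K * E z) * exp (- K * z) <= 0).
      { intros z Hz. assert (A := Hbound z ltac:(lra)). assert (B := exp_pos (- K * z)). nra. }
      assert (A := mono_down G _ (1/2) 1 HG Hn (1/2) x ltac:(lra) ltac:(lra) ltac:(lra)).
      unfold G in A. rewrite HE12 in A. assert (B := exp_pos (- K * x)). assert (C := HEpos x). nra.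
    - set (G := fun x => E x * exp (K * x)).
      assert (HG : forall z, 0 <= z <= 1/2 -> is_derive G z ((dE z + K * E z) * exp (K * z))).
      { intros z Hz. unfold G. eapply is_derive_eq.
        { apply (dmult E (fun z => exp (K * z))). apply HE.
          auto_derive; auto. }
        ring. }
      assert (Hn : forall z, 0 <= z <= 1/2 -> 0 <= (dE z + K * E z) * exp (K * z)).
      { intros z Hz. assert (A := Hbound z ltac:(lra)). assert (B := exp_pos (K * z)). nra. }
      assert (A := mono_up G _ 0 (1/2) HG Hn x (1/2) ltac:(lra) ltac:(lra) ltac:(lra)).
      unfold G in A. rewrite HE12 in A. assert (B := exp_pos (K * x)). assert (C := HEpos x). nra. }
  intros x Hx k Hk. assert (Ez := HEz x Hx). unfold E in Ez.
  assert (A0 := Rle_0_sqr (Y 0%nat x)). assert (A1 := Rle_0_sqr (Y 1%nat x)).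
  assert (A2 := Rle_0_sqr (Y 2%nat x)). assert (A3 := Rle_0_sqr (Y 3%nat x)).
  assert (A4 := Rle_0_sqr (Y 4%nat x)). assert (A5 := Rle_0_sqr (Y 5%nat x)).
  unfold Rsqr in *.
  destruct k as [|[|[|[|[|[|k]]]]]]; try lia; nra.
Qed.

Definition invP (m : R) (p : prm) : prm :=
  let a := s3 / (2*m) in let b := - / (2*m) in let b1 := - / m in
  mkP (b1*q1 p) (-(b1*p1 p)) (a*p2 p + b*q2 p) (a*q2 p - b*p2 p)
      ((-a)*p3 p + b*q3 p) ((-a)*q3 p - b*p3 p).
Definition addP (p q : prm) := mkP (p1 p + p1 q) (q1 p + q1 q) (p2 p + p2 q) (q2 p + q2 q) (p3 p + p3 q) (q3 p + q3 q).
Definition eP := mkP 1 0 1 0 1 0.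
Definition invI m k := Nat.iter k (invP m) eP.
Definition InvD m (d0 d1 d2 d3 d4 d5 : R) : prm :=
  scaleP (/3) (addP (scaleP d0 (invI m 0)) (addP (scaleP d1 (invI m 1)) (addP (scaleP d2 (invI m 2))
    (addP (scaleP d3 (invI m 3)) (addP (scaleP d4 (invI m 4)) (scaleP d5 (invI m 5))))))).
Definition val0 (p : prm) := p1 p + p2 p + p3 p.

Ltac prep m := unfold Rdiv; rewrite ?Rinv_mult; set (i := /2); set (im := / m); set (i3 := /3);
  assert (2 * i = 1) by (unfold i; field); assert (m * im = 1) by (unfold im; field; auto);
  assert (3 * i3 = 1) by (unfold i3; field); assert (Hs := s3s3).

Lemma InvD_ok m d0 d1 d2 d3 d4 d5 : m <> 0 ->
  let q := InvD m d0 d1 d2 d3 d4 d5 in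
  val0 (iterP m 0 q) = d0 /\ val0 (iterP m 1 q) = d1 /\ val0 (iterP m 2 q) = d2 /\
  val0 (iterP m 3 q) = d3 /\ val0 (iterP m 4 q) = d4 /\ val0 (iterP m 5 q) = d5.
Proof.
  intros Hm q. unfold q, val0, iterP, InvD, invI. simpl. unfold stepP, invP, scaleP, addP, eP. simpl.
  prep m. split. nsatz. split. nsatz. split. nsatz. split. nsatz. split. nsatz. nsatz.
Qed.

Lemma InvD_inj_p1 m p : m <> 0 ->
  p1 (InvD m (val0 (iterP m 0 p)) (val0 (iterP m 1 p)) (val0 (iterP m 2 p)) (val0 (iterP m 3 p))
    (val0 (iterP m 4 p)) (val0 (iterP m 5 p))) = p1 p.
Proof.
  intros Hm. destruct p as [a1 b1 a2 b2 a3 b3].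
  unfold val0, iterP, InvD, invI. simpl. unfold stepP, invP, scaleP, addP, eP. simpl.
  prep m. nsatz.
Qed.

Lemma InvD_inj_q1 m p : m <> 0 ->
  q1 (InvD m (val0 (iterP m 0 p)) (val0 (iterP m 1 p)) (val0 (iterP m 2 p)) (val0 (iterP m 3 p))
    (val0 (iterP m 4 p)) (val0 (iterP m 5 p))) = q1 p.
Proof.
  intros Hm. destruct p as [a1 b1 a2 b2 a3 b3].
  unfold val0, iterP, InvD, invI. simpl. unfold stepP, invP, scaleP, addP, eP. simpl.
  prep m. nsatz.
Qed.

Lemma InvD_inj_p2 m p : m <> 0 ->
  p2 (InvD m (val0 (iterP m 0 p)) (val0 (iterP m 1 p)) (val0 (iterP m 2 p)) (val0 (iterP m 3 p))
    (val0 (iterP m 4 p)) (val0 (iterP m 5 p))) = p2 p.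
Proof.
  intros Hm. destruct p as [a1 b1 a2 b2 a3 b3].
  unfold val0, iterP, InvD, invI. simpl. unfold stepP, invP, scaleP, addP, eP. simpl.
  prep m. nsatz.
Qed.

Lemma InvD_inj_q2 m p : m <> 0 ->
  q2 (InvD m (val0 (iterP m 0 p)) (val0 (iterP m 1 p)) (val0 (iterP m 2 p)) (val0 (iterP m 3 p))
    (val0 (iterP m 4 p)) (val0 (iterP m 5 p))) = q2 p.
Proof.
  intros Hm. destruct p as [a1 b1 a2 b2 a3 b3].
  unfold val0, iterP, InvD, invI. simpl. unfold stepP, invP, scaleP, addP, eP. simpl.
  prep m. nsatz.
Qed.

Lemma InvD_inj_p3 m p : m <> 0 ->
  p3 (InvD m (val0 (iterP m 0 p)) (val0 (iterP m 1 p)) (val0 (iterP m 2 p)) (val0 (iterP m 3 p))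
    (val0 (iterP m 4 p)) (val0 (iterP m 5 p))) = p3 p.
Proof.
  intros Hm. destruct p as [a1 b1 a2 b2 a3 b3].
  unfold val0, iterP, InvD, invI. simpl. unfold stepP, invP, scaleP, addP, eP. simpl.
  prep m. nsatz.
Qed.

Lemma InvD_inj_q3 m p : m <> 0 ->
  q3 (InvD m (val0 (iterP m 0 p)) (val0 (iterP m 1 p)) (val0 (iterP m 2 p)) (val0 (iterP m 3 p))
    (val0 (iterP m 4 p)) (val0 (iterP m 5 p))) = q3 p.
Proof.
  intros Hm. destruct p as [a1 b1 a2 b2 a3 b3].
  unfold val0, iterP, InvD, invI. simpl. unfold stepP, invP, scaleP, addP, eP. simpl.
  prep m. nsatz.
Qed.

Lemma InvD_inj m p : m <> 0 ->
  InvD m (val0 (iterP m 0 p)) (val0 (iterP m 1 p)) (val0 (iterP m 2 p)) (val0 (iterP m 3 p))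
    (val0 (iterP m 4 p)) (val0 (iterP m 5 p)) = p.
Proof.
  intros Hm.
  assert (A1 := InvD_inj_p1 m p Hm). assert (A2 := InvD_inj_q1 m p Hm). assert (A3 := InvD_inj_p2 m p Hm).
  assert (A4 := InvD_inj_q2 m p Hm). assert (A5 := InvD_inj_p3 m p Hm). assert (A6 := InvD_inj_q3 m p Hm).
  revert A1 A2 A3 A4 A5 A6.
  generalize (InvD m (val0 (iterP m 0 p)) (val0 (iterP m 1 p)) (val0 (iterP m 2 p)) (val0 (iterP m 3 p))
    (val0 (iterP m 4 p)) (val0 (iterP m 5 p))).
  intros q. destruct q, p; simpl. intros; subst; reflexivity.
Qed.

Lemma U_half m q : U m q (1/2) = p1 q * cos (m/2) + q1 q * sin (m/2)
  + exp (s3*m/4) * (p2 q * cos (m/4) + q2 q * sin (m/4))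
  + exp (-(s3*m/4)) * (p3 q * cos (m/4) + q3 q * sin (m/4)).
Proof.
  unfold U, Ef. rewrite Rmult_0_l, exp_0.
  replace (m * (1/2)) with (m/2) by field. replace (s3*m/2*(1/2)) with (s3*m/4) by field.
  replace (m/2*(1/2)) with (m/4) by field. replace (-(s3*m/2)*(1/2)) with (-(s3*m/4)) by field.
  ring.
Qed.

Lemma U_mhalf m q : U m q (-1/2) = p1 q * cos (m/2) - q1 q * sin (m/2)
  + exp (-(s3*m/4)) * (p2 q * cos (m/4) - q2 q * sin (m/4))
  + exp (s3*m/4) * (p3 q * cos (m/4) - q3 q * sin (m/4)).
Proof.
  unfold U, Ef. rewrite Rmult_0_l, exp_0.
  replace (m * (-1/2)) with (-(m/2)) by field. replace (s3*m/2*(-1/2)) with (-(s3*m/4)) by field.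
  replace (m/2*(-1/2)) with (-(m/4)) by field. replace (-(s3*m/2)*(-1/2)) with (s3*m/4) by field.
  rewrite !cos_neg, !sin_neg. ring.
Qed.

Definition eps1 := mkP 1 0 0 0 0 0.
Definition eps2 := mkP 0 0 (/2) 0 (/2) 0.
Definition eps3 := mkP 0 0 0 (/2) 0 (-/2).
Definition odd1 := mkP 0 1 0 0 0 0.
Definition odd2 := mkP 0 0 (/2) 0 (-/2) 0.
Definition odd3 := mkP 0 0 0 (/2) 0 (/2).
Definition Me m k e := U m (iterP m k e) (1/2).

Lemma sym_half m p k : (k <= 2)%nat ->
  U m (iterP m k p) (1/2) =
    p1 p * Me m k eps1 + (p2 p + p3 p) * Me m k eps2 + (q2 p - q3 p) * Me m k eps3
  + (q1 p * Me m k odd1 + (p2 p - p3 p) * Me m k odd2 + (q2 p + q3 p) * Me m k odd3).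
Proof.
  intros Hk. unfold Me. rewrite !U_half.
  destruct p as [a1 b1 a2 b2 a3 b3].
  destruct k as [|[|[|k]]]; try lia; unfold iterP; simpl; unfold stepP; simpl; field.
Qed.

Lemma sym_mhalf m p k : (k <= 2)%nat ->
  U m (iterP m k p) (-1/2) = (-1)^k * (
    p1 p * Me m k eps1 + (p2 p + p3 p) * Me m k eps2 + (q2 p - q3 p) * Me m k eps3
  - (q1 p * Me m k odd1 + (p2 p - p3 p) * Me m k odd2 + (q2 p + q3 p) * Me m k odd3)).
Proof.
  intros Hk. unfold Me. rewrite !U_half, !U_mhalf.
  destruct p as [a1 b1 a2 b2 a3 b3].
  destruct k as [|[|[|k]]]; try lia; unfold iterP; simpl; unfold stepP; simpl; field.
Qed.

Definition det3 a00 a01 a02 a10 a11 a12 a20 a21 a22 :=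
  a00*(a11*a22 - a12*a21) - a01*(a10*a22 - a12*a20) + a02*(a10*a21 - a11*a20).

Lemma cramer a00 a01 a02 a10 a11 a12 a20 a21 a22 x0 x1 x2 :
  x0*a00 + x1*a01 + x2*a02 = 0 -> x0*a10 + x1*a11 + x2*a12 = 0 -> x0*a20 + x1*a21 + x2*a22 = 0 ->
  let d := det3 a00 a01 a02 a10 a11 a12 a20 a21 a22 in d * x0 = 0 /\ d * x1 = 0 /\ d * x2 = 0.
Proof. intros H0 H1 H2 d. unfold d, det3. repeat split; nsatz. Qed.

Definition detE m := det3 (Me m 0 eps1) (Me m 0 eps2) (Me m 0 eps3)
  (Me m 1 eps1) (Me m 1 eps2) (Me m 1 eps3) (Me m 2 eps1) (Me m 2 eps2) (Me m 2 eps3).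
Definition detO m := det3 (Me m 0 odd1) (Me m 0 odd2) (Me m 0 odd3)
  (Me m 1 odd1) (Me m 1 odd2) (Me m 1 odd3) (Me m 2 odd1) (Me m 2 odd2) (Me m 2 odd3).

Lemma trig_rel m : cos (m/2) = cos (m/4) * cos (m/4) - sin (m/4) * sin (m/4) /\
  sin (m/2) = 2 * sin (m/4) * cos (m/4) /\ sin (m/4) * sin (m/4) + cos (m/4) * cos (m/4) = 1 /\
  cosh (s3*m/2) = (exp (s3*m/4) * exp (s3*m/4) + exp (-(s3*m/4)) * exp (-(s3*m/4))) / 2 /\
  exp (s3*m/4) * exp (-(s3*m/4)) = 1.
Proof.
  replace (m/2) with (2*(m/4)) by field. rewrite cos_2a, sin_2a. repeat split; try ring.
  - assert (H := sin2_cos2 (m/4)). unfold Rsqr in H. lra.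
  - unfold cosh. rewrite <- !exp_plus. f_equal. f_equal; f_equal; field.
  - rewrite <- exp_plus. replace (s3 * m / 4 + - (s3 * m / 4)) with 0 by ring. apply exp_0.
Qed.

Lemma detE_val m : detE m = s3 * (m*m*m) * sin (m/2) * (cosh (s3*m/2) - cos (m/2)) / 4.
Proof.
  destruct (trig_rel m) as [R1 [R2 [R3 [R4 R5]]]].
  unfold detE, det3, Me. rewrite !U_half. unfold iterP; simpl; unfold stepP, eps1, eps2, eps3; simpl.
  rewrite R1, R2, R4. revert R3 R5.
  generalize (cos (m/4)) (sin (m/4)) (exp (s3*m/4)) (exp (-(s3*m/4))). intros cB sB X Xi R3 R5.
  unfold Rdiv. replace (/4) with (/2 * /2) by field. set (i := /2).
  assert (2 * i = 1) by (unfold i; field). assert (Hs := s3s3). nsatz.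
Qed.

Lemma detO_val m : detO m = - (s3 * (m*m*m) * (cos (m/2) * cos (m/2) + cosh (s3*m/2) * cos (m/2) - 2)) / 4.
Proof.
  destruct (trig_rel m) as [R1 [R2 [R3 [R4 R5]]]].
  unfold detO, det3, Me. rewrite !U_half. unfold iterP; simpl; unfold stepP, odd1, odd2, odd3; simpl.
  rewrite R1, R2, R4. revert R3 R5.
  generalize (cos (m/4)) (sin (m/4)) (exp (s3*m/4)) (exp (-(s3*m/4))). intros cB sB X Xi R3 R5.
  unfold Rdiv. replace (/4) with (/2 * /2) by field. set (i := /2).
  assert (2 * i = 1) by (unfold i; field). assert (Hs := s3s3). nsatz.
Qed.

Lemma crossE m : Me m 0 eps2 * Me m 1 eps3 - Me m 0 eps3 * Me m 1 eps2 =
  m * (s3 * sin (m/2) + sinh (s3*m/2)) / 4.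
Proof.
  destruct (trig_rel m) as [R1 [R2 [R3 [R4 R5]]]].
  assert (R6 : sinh (s3*m/2) = (exp (s3*m/4) * exp (s3*m/4) - exp (-(s3*m/4)) * exp (-(s3*m/4))) / 2).
  { unfold sinh. rewrite <- !exp_plus. f_equal. f_equal; f_equal; field. }
  unfold Me. rewrite !U_half. unfold iterP; simpl; unfold stepP, eps1, eps2, eps3; simpl.
  rewrite R2, R6. revert R3 R5.
  generalize (cos (m/4)) (sin (m/4)) (exp (s3*m/4)) (exp (-(s3*m/4))). intros cB sB X Xi R3 R5.
  unfold Rdiv. replace (/4) with (/2 * /2) by field. set (i := /2).
  assert (2 * i = 1) by (unfold i; field). assert (Hs := s3s3). nsatz.
Qed.

Lemma crossO m : Me m 0 odd2 * Me m 1 odd3 - Me m 0 odd3 * Me m 1 odd2 =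
  m * (sinh (s3*m/2) - s3 * sin (m/2)) / 4.
Proof.
  destruct (trig_rel m) as [R1 [R2 [R3 [R4 R5]]]].
  assert (R6 : sinh (s3*m/2) = (exp (s3*m/4) * exp (s3*m/4) - exp (-(s3*m/4)) * exp (-(s3*m/4))) / 2).
  { unfold sinh. rewrite <- !exp_plus. f_equal. f_equal; f_equal; field. }
  unfold Me. rewrite !U_half. unfold iterP; simpl; unfold stepP, odd1, odd2, odd3; simpl.
  rewrite R2, R6. revert R3 R5.
  generalize (cos (m/4)) (sin (m/4)) (exp (s3*m/4)) (exp (-(s3*m/4))). intros cB sB X Xi R3 R5.
  unfold Rdiv. replace (/4) with (/2 * /2) by field. set (i := /2).
  assert (2 * i = 1) by (unfold i; field). assert (Hs := s3s3). nsatz.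
Qed.

Lemma cross_ker a00 a01 a02 a10 a11 a12 a20 a21 a22 :
  let c0 := a01*a12 - a02*a11 in let c1 := a02*a10 - a00*a12 in let c2 := a00*a11 - a01*a10 in
  a00*c0 + a01*c1 + a02*c2 = 0 /\ a10*c0 + a11*c1 + a12*c2 = 0 /\
  a20*c0 + a21*c1 + a22*c2 = det3 a00 a01 a02 a10 a11 a12 a20 a21 a22.
Proof. intros. unfold c0, c1, c2, det3. repeat split; ring. Qed.

Definition Gf m := cos (m/2) * cos (m/2) + cosh (s3*m/2) * cos (m/2) - 2.
Definition zeroP := mkP 0 0 0 0 0 0.
Definition BC m p := forall k, (k <= 2)%nat -> U m (iterP m k p) (1/2) = 0 /\ U m (iterP m k p) (-1/2) = 0.

Lemma cosh_gt1 x : x <> 0 -> 1 < cosh x.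
Proof.
  intros Hx. unfold cosh. assert (A := exp_ineq1 x Hx). assert (B := exp_ineq1 (-x) ltac:(lra)). lra.
Qed.

Lemma cosh_pos x : 0 < cosh x.
Proof. unfold cosh. assert (A := exp_pos x). assert (B := exp_pos (-x)). lra. Qed.

Lemma bc_dich m p : 0 < m -> BC m p -> sin (m/2) = 0 \/ Gf m = 0 \/ p = zeroP.
Proof.
  intros Hm HB.
  assert (Hk : forall k, (k <= 2)%nat ->
    p1 p * Me m k eps1 + (p2 p + p3 p) * Me m k eps2 + (q2 p - q3 p) * Me m k eps3 = 0 /\
    q1 p * Me m k odd1 + (p2 p - p3 p) * Me m k odd2 + (q2 p + q3 p) * Me m k odd3 = 0).
  { intros k Hk. destruct (HB k Hk) as [A B]. rewrite (sym_half m p k Hk) in A.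
    rewrite (sym_mhalf m p k Hk) in B.
    assert (Hs : (-1)^k <> 0) by (apply pow_nonzero; lra).
    apply Rmult_integral in B. destruct B as [B|B]; [contradiction|]. lra. }
  destruct (Hk 0%nat ltac:(lia)) as [E0 O0]. destruct (Hk 1%nat ltac:(lia)) as [E1 O1].
  destruct (Hk 2%nat ltac:(lia)) as [E2 O2].
  destruct (Req_dec (sin (m/2)) 0) as [Hs|Hs]; [left; auto|].
  destruct (Req_dec (Gf m) 0) as [Hg|Hg]; [right; left; auto|].
  right; right.
  assert (CE := cramer _ _ _ _ _ _ _ _ _ _ _ _ E0 E1 E2). simpl in CE. fold (detE m) in CE.
  assert (CO := cramer _ _ _ _ _ _ _ _ _ _ _ _ O0 O1 O2). simpl in CO. fold (detO m) in CO.
  assert (HdE : detE m <> 0).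
  { rewrite detE_val. assert (H1 := cosh_gt1 (s3*m/2) ltac:(assert (H := s3_pos); nra)).
    assert (H2 := COS_bound (m/2)). assert (H3 := s3_pos).
    assert (0 < m*m*m) by (repeat apply Rmult_lt_0_compat; auto).
    intros HH. assert (s3 * (m*m*m) * sin (m/2) * (cosh (s3*m/2) - cos (m/2)) = 0) by lra.
    repeat (apply Rmult_integral in H0; destruct H0 as [H0|H0]); lra. }
  assert (HdO : detO m <> 0).
  { rewrite detO_val. assert (H3 := s3_pos). unfold Gf in Hg.
    assert (0 < m*m*m) by (repeat apply Rmult_lt_0_compat; auto).
    intros HH. assert (s3 * (m*m*m) * (cos (m/2) * cos (m/2) + cosh (s3*m/2) * cos (m/2) - 2) = 0) by lra.
    repeat (apply Rmult_integral in H0; destruct H0 as [H0|H0]); lra. }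
  destruct CE as [A1 [A2 A3]]. destruct CO as [B1 [B2 B3]].
  apply Rmult_integral in A1, A2, A3, B1, B2, B3.
  destruct p as [a1 b1 a2 b2 a3 b3]; simpl in *. unfold zeroP.
  destruct A1, A2, A3, B1, B2, B3; try contradiction.
  f_equal; lra.
Qed.

Lemma cosh_ge1 x : 1 <= cosh x.
Proof. destruct (Req_dec x 0) as [->|H]. unfold cosh; rewrite Ropp_0, exp_0; lra. left; now apply cosh_gt1. Qed.

Lemma sinh_ge_x x : 0 <= x -> x <= sinh x.
Proof.
  intros Hx.
  assert (A := mono_up (fun t => sinh t - t) (fun t => cosh t - 1) 0 x).
  assert (B : sinh 0 - 0 <= sinh x - x).
  { apply A; try lra.
    - intros t Ht. unfold sinh, cosh. auto_derive; auto. field.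
    - intros t Ht. assert (H := cosh_ge1 t). lra. }
  replace (sinh 0) with 0 in B by (unfold sinh; rewrite Ropp_0, exp_0; field). lra.
Qed.

Lemma U_scale m c p t : U m (scaleP c p) t = c * U m p t.
Proof. unfold U, Ef, scaleP. simpl. ring. Qed.

Lemma bc_even m : 0 < m -> sin (m/2) = 0 -> exists p, BC m p /\ p1 p <> 0.
Proof.
  intros Hm Hs.
  destruct (cross_ker (Me m 0 eps1) (Me m 0 eps2) (Me m 0 eps3) (Me m 1 eps1) (Me m 1 eps2) (Me m 1 eps3)
     (Me m 2 eps1) (Me m 2 eps2) (Me m 2 eps3)) as [K0 [K1 K2]].
  fold (detE m) in K2. rewrite detE_val, Hs in K2.
  set (c0 := Me m 0 eps2 * Me m 1 eps3 - Me m 0 eps3 * Me m 1 eps2) in *.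
  set (c1 := Me m 0 eps3 * Me m 1 eps1 - Me m 0 eps1 * Me m 1 eps3) in *.
  set (c2 := Me m 0 eps1 * Me m 1 eps2 - Me m 0 eps2 * Me m 1 eps1) in *.
  exists (mkP c0 0 (c1/2) (c2/2) (c1/2) (-(c2/2))). split.
  - intros k Hk. rewrite (sym_half m _ k Hk), (sym_mhalf m _ k Hk). simpl.
    destruct k as [|[|[|k]]]; try lia; split; nra.
  - simpl. unfold c0. rewrite crossE, Hs.
    assert (H := sinh_ge_x (s3*m/2)). assert (H3 := s3_pos).
    assert (0 < s3*m/2) by nra. specialize (H ltac:(lra)). nra.
Qed.

Lemma bc_odd m : 0 < m -> Gf m = 0 -> exists p, BC m p /\ q1 p <> 0.
Proof.
  intros Hm Hs.
  destruct (cross_ker (Me m 0 odd1) (Me m 0 odd2) (Me m 0 odd3) (Me m 1 odd1) (Me m 1 odd2) (Me m 1 odd3)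
     (Me m 2 odd1) (Me m 2 odd2) (Me m 2 odd3)) as [K0 [K1 K2]].
  fold (detO m) in K2. rewrite detO_val in K2. unfold Gf in Hs. rewrite Hs in K2.
  set (c0 := Me m 0 odd2 * Me m 1 odd3 - Me m 0 odd3 * Me m 1 odd2) in *.
  set (c1 := Me m 0 odd3 * Me m 1 odd1 - Me m 0 odd1 * Me m 1 odd3) in *.
  set (c2 := Me m 0 odd1 * Me m 1 odd2 - Me m 0 odd2 * Me m 1 odd1) in *.
  exists (mkP 0 c0 (c1/2) (c2/2) (-(c1/2)) (c2/2)). split.
  - intros k Hk. rewrite (sym_half m _ k Hk), (sym_mhalf m _ k Hk). simpl.
    destruct k as [|[|[|k]]]; try lia; split; nra.
  - simpl. unfold c0. rewrite crossO.
    assert (H := sinh_ge_x (s3*m/2)). assert (H3 := s3_pos).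
    assert (0 < s3*m/2) by nra. specialize (H ltac:(lra)).
    assert (H4 := sin_lt_x (m/2) ltac:(lra)). nra.
Qed.

Lemma U_at0 m q : U m q 0 = val0 q.
Proof. unfold U, Ef, val0. rewrite !Rmult_0_r, exp_0, cos_0, sin_0. ring. Qed.

Lemma vfam m p k x :
  Derive_n (fun x => U m p (x - 1/2)) k x = U m (iterP m k p) (x - 1/2) /\
  ex_derive_n (fun x => U m p (x - 1/2)) k x.
Proof.
  apply (family_Derive_n (fun k x => U m (iterP m k p) (x - 1/2))).
  intros j y. apply U_deriv_sh.
Qed.

Lemma eig_construct m p : 0 < m -> BC m p -> p <> zeroP -> is_eigenvalue6 (m^6).
Proof.
  intros Hm HB Hp. exists (fun x => U m p (x - 1/2)). split; [|split; [|split]].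
  - intros k x _. apply vfam.
  - intros x Hx. rewrite (proj1 (vfam m p 6 x)). rewrite iterP6, U_scale. simpl. ring.
  - intros k Hk. rewrite (proj1 (vfam m p k 0)), (proj1 (vfam m p k 1)).
    replace (0 - 1/2) with (-1/2) by field. replace (1 - 1/2) with (1/2) by field.
    destruct (HB k Hk); split; auto.
  - apply NNPP. intros Hn. apply Hp.
    assert (Hz : forall x, 0 <= x <= 1 -> U m p (x - 1/2) = 0).
    { intros x Hx. apply NNPP. intros Hne. apply Hn. exists x. split; auto. }
    assert (Hd : forall k, Derive_n (fun x => U m p (x - 1/2)) k (1/2) = 0).
    { intros k. rewrite (Derive_n_ext_loc _ (fun _ => 0)).
      - destruct k. simpl; auto. apply Derive_n_const.
      - apply (locally_interval _ (1/2) 0 1); [lra|]. intros y Hy. apply Hz. lra. }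
    assert (Hv : forall k, val0 (iterP m k p) = 0).
    { intros k. assert (E := proj1 (vfam m p k (1/2))). replace (1/2 - 1/2) with 0 in E by ring.
      rewrite U_at0 in E. rewrite <- E. apply Hd. }
    rewrite <- (InvD_inj m p) by lra. rewrite !Hv. unfold InvD, zeroP, scaleP, addP; simpl; f_equal; ring.
Qed.

Lemma eig_analysis lam u : is_eigenfunction6 lam u ->
  exists m, 0 < m /\ lam = m^6 /\ (sin (m/2) = 0 \/ Gf m = 0).
Proof.
  intros He. assert (Hl := lam_pos lam u He).
  set (m := exp (ln lam / 6)).
  assert (Hm : 0 < m) by apply exp_pos.
  assert (Hm6 : m^6 = lam).
  { unfold m. simpl. rewrite Rmult_1_r. repeat rewrite <- exp_plus.
    match goal with |- exp ?s = _ => replace s with (ln lam) by field end. apply exp_ln; auto. }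
  exists m. split; [auto|split; [auto|]].
  assert (HD := eig_deriv lam u He).
  destruct He as [Hex [Hode [Hbc [x0 [Hx0 Hu0]]]]].
  set (d := fun k => Derive_n u k (1/2)).
  set (p := InvD m (d 0%nat) (d 1%nat) (d 2%nat) (d 3%nat) (d 4%nat) (d 5%nat)).
  set (Y := fun k x => Derive_n u k x - U m (iterP m k p) (x - 1/2)).
  assert (HY : forall k x, (k <= 5)%nat -> is_derive (Y k) x (Y (S k) x)).
  { intros k x Hk. unfold Y. apply (is_derive_minus (Derive_n u k) (fun x => U m (iterP m k p) (x - 1/2))).
    apply HD; auto. apply U_deriv_sh. }
  assert (HY6 : forall x, 0 <= x <= 1 -> Y 6%nat x = (- lam) * Y 0%nat x).
  { intros x Hx. unfold Y. rewrite iterP6, U_scale. assert (E := Hode x Hx).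
    replace (Derive_n u 6 x) with (- (lam * u x)) by lra. simpl (iterP m 0 p). simpl (Derive_n u 0).
    rewrite <- Hm6. simpl. ring. }
  assert (HY0 : forall k, (k <= 5)%nat -> Y k (1/2) = 0).
  { intros k Hk. unfold Y. replace (1/2 - 1/2) with 0 by ring. rewrite U_at0.
    assert (Hm0 : m <> 0) by lra. destruct (InvD_ok m (d 0%nat) (d 1%nat) (d 2%nat) (d 3%nat) (d 4%nat) (d 5%nat) Hm0)
      as [A0 [A1 [A2 [A3 [A4 A5]]]]]. fold p in A0, A1, A2, A3, A4, A5.
    destruct k as [|[|[|[|[|[|k]]]]]]; try lia.
    all: [> rewrite A0 | rewrite A1 | rewrite A2 | rewrite A3 | rewrite A4 | rewrite A5 ]; unfold d; ring. }
  assert (Hz := energy Y (- lam) HY HY6 HY0).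
  assert (HB : BC m p).
  { intros k Hk. split.
    - assert (A := Hz 1 ltac:(lra) k ltac:(lia)). unfold Y in A. destruct (Hbc k Hk) as [_ B].
      replace (1 - 1/2) with (1/2) in A by field. lra.
    - assert (A := Hz 0 ltac:(lra) k ltac:(lia)). unfold Y in A. destruct (Hbc k Hk) as [B _].
      replace (0 - 1/2) with (-1/2) in A by field. lra. }
  destruct (bc_dich m p Hm HB) as [H|[H|H]]; auto.
  exfalso. apply Hu0. assert (A := Hz x0 Hx0 0%nat ltac:(lia)). unfold Y in A. simpl in A.
  rewrite H in A. unfold U, Ef, zeroP in A. simpl in A. lra.
Qed.


Lemma nonneg_deriv (f df : R -> R) :
  (forall x, 0 <= x -> is_derive f x (df x)) -> (forall x, 0 <= x -> 0 <= df x) -> f 0 = 0 ->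
  forall x, 0 <= x -> 0 <= f x.
Proof.
  intros Hd Hp H0 x Hx. rewrite <- H0.
  apply (mono_up f df 0 x); try lra.
  - intros; apply Hd; lra.
  - intros; apply Hp; lra.
Qed.

Lemma sin_le_x' : forall x, 0 <= x -> 0 <= x - sin x.
Proof.
  apply (nonneg_deriv (fun x => x - sin x) (fun x => 1 - cos x)).
  - intros; auto_derive; auto; ring.
  - intros y Hy; assert (HH := COS_bound y); lra.
  - rewrite sin_0; ring.
Qed.
Lemma cos_lb2 : forall x, 0 <= x -> 0 <= cos x - 1 + x*x/2.
Proof.
  apply (nonneg_deriv (fun x => cos x - 1 + x*x/2) (fun x => x - sin x)).
  - intros; auto_derive; auto; field.
  - intros; apply sin_le_x'; auto.
  - rewrite cos_0; field.
Qed.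
Lemma sin_lb3 : forall x, 0 <= x -> 0 <= sin x - x + x*x*x/6.
Proof.
  apply (nonneg_deriv (fun x => sin x - x + x*x*x/6) (fun x => cos x - 1 + x*x/2)).
  - intros; auto_derive; auto; field.
  - intros; apply cos_lb2; auto.
  - rewrite sin_0; field.
Qed.
Lemma cos_ub4 : forall x, 0 <= x -> 0 <= 1 - x*x/2 + x*x*x*x/24 - cos x.
Proof.
  apply (nonneg_deriv (fun x => 1 - x*x/2 + x*x*x*x/24 - cos x) (fun x => sin x - x + x*x*x/6)).
  - intros; auto_derive; auto; field.
  - intros; apply sin_lb3; auto.
  - rewrite cos_0; field.
Qed.
Lemma sin_ub5 : forall x, 0 <= x -> 0 <= x - x*x*x/6 + x*x*x*x*x/120 - sin x.
Proof.
  apply (nonneg_deriv (fun x => x - x*x*x/6 + x*x*x*x*x/120 - sin x) (fun x => 1 - x*x/2 + x*x*x*x/24 - cos x)).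
  - intros; auto_derive; auto; field.
  - intros; apply cos_ub4; auto.
  - rewrite sin_0; field.
Qed.
Lemma cos_lb6 : forall x, 0 <= x -> 0 <= cos x - (1 - x*x/2 + x*x*x*x/24 - x*x*x*x*x*x/720).
Proof.
  apply (nonneg_deriv (fun x => cos x - (1 - x*x/2 + x*x*x*x/24 - x*x*x*x*x*x/720)) (fun x => x - x*x*x/6 + x*x*x*x*x/120 - sin x)).
  - intros; auto_derive; auto; field.
  - intros; apply sin_ub5; auto.
  - rewrite cos_0; field.
Qed.

Lemma exp_le' x y : x <= y -> exp x <= exp y.
Proof. intros H. destruct (Rle_lt_or_eq_dec _ _ H) as [H1|H1]. left; apply exp_increasing; auto. subst; lra. Qed.

Lemma sinh_ge0 x : 0 <= x -> 0 <= sinh x.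
Proof. intros Hx. unfold sinh. assert (exp (-x) <= exp x) by (apply exp_le'; lra). lra. Qed.

Lemma cosh_ge1' x : 1 <= cosh x.
Proof.
  destruct (Req_dec x 0) as [->|H]. unfold cosh; rewrite Ropp_0, exp_0; lra.
  unfold cosh. assert (A := exp_ineq1 x H). assert (B := exp_ineq1 (-x) ltac:(lra)). lra.
Qed.

Lemma cosh_mono x y : 0 <= x -> x <= y -> cosh x <= cosh y.
Proof.
  intros Hx Hxy. apply (mono_up cosh sinh x y); try lra.
  - intros t Ht. unfold cosh, sinh. auto_derive; auto. field.
  - intros t Ht. apply sinh_ge0; lra.
Qed.

Lemma cosh_lb4 x : 0 <= x -> 1 + x*x/2 + x*x*x*x/24 <= cosh x.
Proof.
  intros Hx.
  assert (H1 : forall x, 0 <= x -> 0 <= sinh x - x).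
  { apply (nonneg_deriv (fun x => sinh x - x) (fun x => cosh x - 1)).
    - intros; unfold sinh, cosh; auto_derive; auto; field.
    - intros y Hy; assert (HH := cosh_ge1' y); lra.
    - unfold sinh; rewrite Ropp_0, exp_0; field. }
  assert (H2 : forall x, 0 <= x -> 0 <= cosh x - 1 - x*x/2).
  { apply (nonneg_deriv (fun x => cosh x - 1 - x*x/2) (fun x => sinh x - x)).
    - intros; unfold sinh, cosh; auto_derive; auto; field.
    - intros; apply H1; auto.
    - unfold cosh; rewrite Ropp_0, exp_0; field. }
  assert (H3 : forall x, 0 <= x -> 0 <= sinh x - x - x*x*x/6).
  { apply (nonneg_deriv (fun x => sinh x - x - x*x*x/6) (fun x => cosh x - 1 - x*x/2)).
    - intros; unfold sinh, cosh; auto_derive; auto; field.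
    - intros; apply H2; auto.
    - unfold sinh; rewrite Ropp_0, exp_0; field. }
  assert (H4 : forall x, 0 <= x -> 0 <= cosh x - 1 - x*x/2 - x*x*x*x/24).
  { apply (nonneg_deriv (fun x => cosh x - 1 - x*x/2 - x*x*x*x/24) (fun x => sinh x - x - x*x*x/6)).
    - intros; unfold sinh, cosh; auto_derive; auto; field.
    - intros; apply H3; auto.
    - unfold cosh; rewrite Ropp_0, exp_0; field. }
  assert (H := H4 x Hx). lra.
Qed.

Lemma cosh_ub x : 0 <= x -> cosh x <= (exp x + 1) / 2.
Proof. intros Hx. unfold cosh. assert (exp (-x) <= exp 0) by (apply exp_le'; lra). rewrite exp_0 in H. lra. Qed.

Lemma s3_bounds : 1.732 < s3 < 1.7321.
Proof. assert (H := s3s3). assert (H1 := s3_pos). split; nra. Qed.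

Lemma poly6_pos a : 1 <= a <= 1.45 -> 0 < 1 - a*a/2 + a*a*a*a/24 - a*a*a*a*a*a/720.
Proof.
  intros Ha. assert (T1 : 1 <= a*a) by nra. assert (T2 : a*a <= 2.1025) by nra.
  replace (1 - a*a/2 + a*a*a*a/24 - a*a*a*a*a*a/720) with (1 - (a*a)/2 + (a*a)*(a*a)/24 - (a*a)*(a*a)*(a*a)/720) by field.
  generalize dependent (a*a). intros t T1 T2. nra.
Qed.

Lemma pi2_lo : 1.45 < PI/2.
Proof.
  destruct (Rlt_or_le 1.45 (PI/2)) as [H|H]; auto. exfalso.
  assert (H1 := PI2_1). assert (A := cos_lb6 (PI/2) ltac:(lra)). rewrite cos_PI2 in A.
  assert (B := poly6_pos (PI/2) ltac:(lra)). lra.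
Qed.

Lemma pi2_hi : PI/2 < 1.73.
Proof.
  destruct (Rlt_or_le (PI/2) 1.73) as [H|H]; auto. exfalso.
  assert (A := cos_ub4 1.73 ltac:(lra)). assert (B := cos_ge_0 1.73 ltac:(lra) H). lra.
Qed.

Definition pphi := mkP (/3) 0 (/3) 0 (/3) 0.
Definition Phi k y := U 1 (iterP 1 k pphi) y.

Lemma Phi0_eq y : Phi 0 y = (2 * cos (y/2) * cos (y/2) - 1 + 2 * cos (y/2) * cosh (s3*(y/2))) / 3.
Proof.
  unfold Phi, U, Ef, pphi, iterP. simpl. unfold cosh.
  replace (1 * y) with (2 * (y/2)) by field. rewrite cos_2a_cos.
  replace (1/2*y) with (y/2) by field. replace (s3*1/2*y) with (s3*(y/2)) by field.
  replace (- (s3*1/2) * y) with (- (s3*(y/2))) by field. rewrite Rmult_0_l, exp_0. field.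
Qed.

Lemma Gf_Phi y : Gf y = 3/2 * (Phi 0 y - 1).
Proof. rewrite Phi0_eq. unfold Gf. replace (s3*y/2) with (s3*(y/2)) by field. field. Qed.

Lemma Phi_deriv k y : is_derive (Phi k) y (Phi (S k) y).
Proof. unfold Phi. apply U_deriv. Qed.

Lemma Phi6 y : Phi 6 y = - Phi 0 y.
Proof. unfold Phi. rewrite iterP6, U_scale. simpl. ring. Qed.

Lemma U0_val m q : U m q 0 = p1 q + p2 q + p3 q.
Proof. unfold U, Ef. rewrite !Rmult_0_r, exp_0, cos_0, sin_0. ring. Qed.

Lemma Phi_at0 : Phi 0 0 = 1 /\ Phi 1 0 = 0 /\ Phi 2 0 = 0 /\ Phi 3 0 = 0 /\ Phi 4 0 = 0 /\ Phi 5 0 = 0.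
Proof.
  unfold Phi. rewrite !U0_val. unfold iterP, pphi. simpl. unfold stepP. simpl.
  unfold Rdiv. set (i := /2). set (i3 := /3).
  assert (2 * i = 1) by (unfold i; field). assert (3 * i3 = 1) by (unfold i3; field).
  assert (Hs := s3s3). repeat split; nsatz.
Qed.

Lemma chain_step (f df : R -> R) Y : (forall x, is_derive f x (df x)) -> f 0 = 0 ->
  (forall x, 0 < x <= Y -> 0 < df x) -> forall x, 0 < x <= Y -> 0 < f x.
Proof.
  intros Hd H0 Hp x Hx. destruct (mvt f df 0 x ltac:(lra)) as [c [Hc E]].
  - intros; apply Hd.
  - assert (0 < df c) by (apply Hp; lra). rewrite H0 in E. nra.
Qed.

Lemma exp3 : exp 3 <= 27.
Proof.
  replace 3 with (1 + 1 + 1) by ring. rewrite !exp_plus.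
  assert (A := exp_le_3). assert (B := exp_pos 1). 
  assert (exp 1 * exp 1 <= 9) by nra. nra.
Qed.

Lemma cos_le_at a x : 0 <= a -> a <= x -> x <= PI -> cos x <= cos a.
Proof.
  intros Ha Hax Hx. destruct (Rle_lt_or_eq_dec _ _ Hax) as [H|H].
  - left. apply cos_decreasing_1; lra.
  - subst; lra.
Qed.

Lemma Phi0_pos y : 0 < y <= 2.9 -> 0 < Phi 0 y.
Proof.
  intros Hy. rewrite Phi0_eq. set (t := y/2).
  assert (Ht : 0 < t <= 1.45) by (unfold t; lra).
  assert (HP := pi2_lo). assert (S3 := s3_bounds). assert (S3p := s3_pos).
  assert (Hc0 : 0 <= cos t) by (apply cos_ge_0; lra).
  assert (HH1 := cosh_ge1' (s3*t)).
  assert (L145 := cos_lb6 1.45 ltac:(lra)).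
  assert (C145 := cos_le_at t 1.45 ltac:(lra) ltac:(lra) ltac:(lra)).
  destruct (Rle_lt_dec t 1.18) as [T1|T1].
  - assert (L := cos_lb6 1.18 ltac:(lra)).
    assert (C := cos_le_at t 1.18 ltac:(lra) ltac:(lra) ltac:(lra)).
    assert (0.38 <= cos t) by lra. nra.
  - destruct (Rle_lt_dec t 1.35) as [T2|T2].
    + assert (L := cos_lb6 1.35 ltac:(lra)).
      assert (C := cos_le_at t 1.35 ltac:(lra) ltac:(lra) ltac:(lra)).
      assert (0.2187 <= cos t) by lra.
      assert (HC := cosh_mono (s3*1.18) (s3*t) ltac:(nra) ltac:(nra)).
      assert (HL := cosh_lb4 (s3*1.18) ltac:(nra)).
      assert (E : s3*1.18*(s3*1.18) = 3 * (1.18*1.18)) by (transitivity (s3*s3*(1.18*1.18)); [ring|rewrite s3s3; ring]).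
      replace (1 + s3 * 1.18 * (s3 * 1.18) / 2 + s3 * 1.18 * (s3 * 1.18) * (s3 * 1.18) * (s3 * 1.18) / 24)
        with (1 + (s3*1.18*(s3*1.18)) / 2 + (s3*1.18*(s3*1.18)) * (s3*1.18*(s3*1.18)) / 24) in HL by field.
      rewrite E in HL. assert (3.8 <= cosh (s3*t)) by lra. nra.
    + assert (0.1194 <= cos t) by lra.
      assert (HC := cosh_mono (s3*1.35) (s3*t) ltac:(nra) ltac:(nra)).
      assert (HL := cosh_lb4 (s3*1.35) ltac:(nra)).
      assert (E : s3*1.35*(s3*1.35) = 3 * (1.35*1.35)) by (transitivity (s3*s3*(1.35*1.35)); [ring|rewrite s3s3; ring]).
      replace (1 + s3 * 1.35 * (s3 * 1.35) / 2 + s3 * 1.35 * (s3 * 1.35) * (s3 * 1.35) * (s3 * 1.35) / 24)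
        with (1 + (s3*1.35*(s3*1.35)) / 2 + (s3*1.35*(s3*1.35)) * (s3*1.35*(s3*1.35)) / 24) in HL by field.
      rewrite E in HL. assert (4.97 <= cosh (s3*t)) by lra. nra.
Qed.

Lemma Phi0_lt1 y : 0 < y <= 2.9 -> Phi 0 y < 1.
Proof.
  intros Hy. destruct Phi_at0 as [A0 [A1 [A2 [A3 [A4 A5]]]]].
  assert (D : forall k x, is_derive (fun y => - Phi k y) x (- Phi (S k) x)).
  { intros k x. apply (is_derive_opp (Phi k)). apply Phi_deriv. }
  assert (F5 : forall x, 0 < x <= 2.9 -> 0 < - Phi 5 x).
  { apply (chain_step (fun y => - Phi 5 y) (fun y => Phi 0 y)).
    - intros x. eapply is_derive_eq. apply D. rewrite Phi6; ring.
    - rewrite A5; ring.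
    - apply Phi0_pos. }
  assert (F4 : forall x, 0 < x <= 2.9 -> 0 < - Phi 4 x).
  { apply (chain_step (fun y => - Phi 4 y) (fun y => - Phi 5 y)); auto. rewrite A4; ring. }
  assert (F3 : forall x, 0 < x <= 2.9 -> 0 < - Phi 3 x).
  { apply (chain_step (fun y => - Phi 3 y) (fun y => - Phi 4 y)); auto. rewrite A3; ring. }
  assert (F2 : forall x, 0 < x <= 2.9 -> 0 < - Phi 2 x).
  { apply (chain_step (fun y => - Phi 2 y) (fun y => - Phi 3 y)); auto. rewrite A2; ring. }
  assert (F1 : forall x, 0 < x <= 2.9 -> 0 < - Phi 1 x).
  { apply (chain_step (fun y => - Phi 1 y) (fun y => - Phi 2 y)); auto. rewrite A1; ring. }
  assert (F0 : forall x, 0 < x <= 2.9 -> 0 < 1 - Phi 0 x).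
  { apply (chain_step (fun y => 1 - Phi 0 y) (fun y => - Phi 1 y)); auto.
    - intros x. eapply is_derive_eq. apply (is_derive_minus (fun _ => 1) (Phi 0)).
      apply is_derive_const. apply Phi_deriv. unfold minus, plus, opp, zero; simpl; ring.
    - rewrite A0; ring. }
  assert (H := F0 y Hy). lra.
Qed.

Lemma Gf_neg_small y : 0 < y < PI -> Gf y < 0.
Proof.
  intros Hy. destruct (Rle_lt_dec y 2.9) as [H|H].
  - rewrite Gf_Phi. assert (A := Phi0_lt1 y ltac:(lra)). lra.
  - unfold Gf. set (t := y/2).
    assert (HP := pi2_lo). assert (HP2 := pi2_hi). assert (S3 := s3_bounds). assert (S3p := s3_pos).
    assert (Ht : 1.45 < t < PI/2) by (unfold t; lra).
    assert (Hc0 : 0 <= cos t) by (apply cos_ge_0; lra).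
    assert (U145 := cos_ub4 1.45 ltac:(lra)).
    assert (C145 := cos_le_at 1.45 t ltac:(lra) ltac:(lra) ltac:(lra)).
    assert (Hc1 : cos t <= 0.133) by lra.
    replace (s3*y/2) with (s3*t) by (unfold t; field).
    assert (HU := cosh_ub (s3*t) ltac:(nra)).
    assert (HE := exp_le' (s3*t) 3 ltac:(nra)). assert (E3 := exp3).
    assert (cosh (s3*t) <= 14) by lra. assert (HH1 := cosh_ge1' (s3*t)). nra.
Qed.

Lemma Gf_neg_cos y : cos (y/2) <= 0 -> Gf y < 0.
Proof.
  intros Hc. unfold Gf. assert (A := COS_bound (y/2)). assert (B := cosh_pos (s3*y/2)). nra.
Qed.

Lemma Gf_cont : continuity Gf.
Proof.
  intros x. apply derivable_continuous_pt. eexists. apply is_derive_Reals.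
  unfold Gf, cosh. auto_derive; auto.
Qed.

Lemma PI_pos' : 2.9 < PI.
Proof. assert (H := pi2_lo). lra. Qed.

Lemma Gf_L i : Gf ((4*INR i + 3)*PI) = -2.
Proof.
  unfold Gf. replace ((4*INR i + 3)*PI/2) with (3*(PI/2) + 2*INR i*PI) by field.
  rewrite cos_period, cos_3PI2. ring.
Qed.

Lemma Gf_F i : Gf ((4*INR i + 5)*PI) = -2.
Proof.
  unfold Gf. replace ((4*INR i + 5)*PI/2) with (PI/2 + 2*INR (S i)*PI) by (rewrite S_INR; field).
  rewrite cos_period, cos_PI2. ring.
Qed.

Lemma Gf_R i : 0 < Gf ((4*INR i + 4)*PI).
Proof.
  unfold Gf. replace ((4*INR i + 4)*PI/2) with (0 + 2*INR (S i)*PI) by (rewrite S_INR; field).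
  rewrite cos_period, cos_0. assert (H := pos_INR i). assert (HP := PI_pos').
  assert (A := cosh_gt1 (s3 * ((4 * INR i + 4) * PI) / 2)).
  assert (H3 := s3_pos).
  assert (0 < s3 * ((4 * INR i + 4) * PI) / 2).
  { apply Rmult_lt_0_compat; [|lra]. apply Rmult_lt_0_compat; auto. nra. }
  specialize (A ltac:(lra)). lra.
Qed.

Lemma ex_rise i : {z | (4*INR i + 3)*PI < z < (4*INR i + 4)*PI /\ Gf z = 0}.
Proof.
  assert (HP := PI_pos'). assert (H := pos_INR i).
  destruct (IVT Gf ((4*INR i + 3)*PI) ((4*INR i + 4)*PI) Gf_cont ltac:(nra)) as [z [Hz1 Hz2]].
  - rewrite Gf_L; lra.
  - apply Gf_R.
  - exists z. split; auto. destruct Hz1 as [A B]. split.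
    + destruct (Rle_lt_or_eq_dec _ _ A) as [C|C]; auto. subst. rewrite Gf_L in Hz2. lra.
    + destruct (Rle_lt_or_eq_dec _ _ B) as [C|C]; auto. subst. assert (D := Gf_R i). lra.
Qed.

Lemma ex_fall i : {z | (4*INR i + 4)*PI < z < (4*INR i + 5)*PI /\ Gf z = 0}.
Proof.
  assert (HP := PI_pos'). assert (H := pos_INR i).
  assert (Hc : continuity (fun y => - Gf y)) by (apply continuity_opp; apply Gf_cont).
  destruct (IVT (fun y => - Gf y) ((4*INR i + 4)*PI) ((4*INR i + 5)*PI) Hc ltac:(nra)) as [z [Hz1 Hz2]].
  - assert (D := Gf_R i). lra.
  - rewrite Gf_F; lra.
  - exists z. split; [|lra]. destruct Hz1 as [A B]. split.
    + destruct (Rle_lt_or_eq_dec _ _ A) as [C|C]; auto. subst. assert (D := Gf_R i). lra.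
    + destruct (Rle_lt_or_eq_dec _ _ B) as [C|C]; auto. subst. rewrite Gf_F in Hz2. lra.
Qed.

Lemma rise_mono i y1 y2 : (4*INR i + 3)*PI <= y1 -> y1 < y2 -> y2 <= (4*INR i + 4)*PI -> Gf y1 < Gf y2.
Proof.
  intros H1 H12 H2. assert (HP := PI_pos'). assert (Hi := pos_INR i).
  set (s1 := y1/2 - 2*INR i*PI). set (s2 := y2/2 - 2*INR i*PI).
  assert (E1 : cos (y1/2) = cos s1) by (unfold s1; rewrite <- (cos_period (y1/2 - 2*INR i*PI) i); f_equal; ring).
  assert (E2 : cos (y2/2) = cos s2) by (unfold s2; rewrite <- (cos_period (y2/2 - 2*INR i*PI) i); f_equal; ring).
  assert (Hs1 : 3*(PI/2) <= s1 <= 2*PI) by (unfold s1; nra).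
  assert (Hs2 : 3*(PI/2) <= s2 <= 2*PI) by (unfold s2; nra).
  assert (C12 : cos s1 < cos s2) by (apply cos_increasing_1; try lra; unfold s1, s2; lra).
  assert (C1 : 0 <= cos s1).
  { replace s1 with ((s1 - 2*PI) + 2*INR 1*PI) by (rewrite INR_1; ring). rewrite cos_period.
    apply cos_ge_0; lra. }
  assert (H3 := s3_pos).
  assert (Hy1 : 0 <= y1) by nra.
  assert (HC := cosh_mono (s3*y1/2) (s3*y2/2) ltac:(apply Rmult_le_pos; [apply Rmult_le_pos; lra|lra]) ltac:(apply Rmult_le_compat_r; [lra|apply Rmult_le_compat_l; lra])).
  assert (HC1 := cosh_pos (s3*y1/2)).
  unfold Gf. rewrite E1, E2. nra.
Qed.

Lemma rise_unique i y1 y2 : (4*INR i + 3)*PI <= y1 <= (4*INR i + 4)*PI ->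
  (4*INR i + 3)*PI <= y2 <= (4*INR i + 4)*PI -> Gf y1 = 0 -> Gf y2 = 0 -> y1 = y2.
Proof.
  intros A B C D. destruct (Rtotal_order y1 y2) as [H|[H|H]]; auto.
  - assert (E := rise_mono i y1 y2 ltac:(lra) H ltac:(lra)). lra.
  - assert (E := rise_mono i y2 y1 ltac:(lra) H ltac:(lra)). lra.
Qed.

Lemma root_cpos y : Gf y = 0 -> 0 < cos (y/2).
Proof.
  intros H. destruct (Rlt_or_le 0 (cos (y/2))) as [A|A]; auto.
  assert (B := Gf_neg_cos y A). lra.
Qed.

Lemma sinh_le_cosh x : sinh x <= cosh x.
Proof. unfold sinh, cosh. assert (H := exp_pos (-x)). lra. Qed.

Lemma fall_no2 i y1 y2 : (4*INR i + 4)*PI <= y1 -> y1 < y2 -> y2 <= (4*INR i + 5)*PI ->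
  Gf y1 = 0 -> Gf y2 = 0 -> False.
Proof.
  intros H1 H12 H2 G1 G2. assert (HP := PI_pos'). assert (Hi := pos_INR i).
  assert (HP2 := pi2_lo). assert (S3 := s3_bounds). assert (H3 := s3_pos).
  set (J := INR (S i)).
  assert (HJ : J = INR i + 1) by (unfold J; apply S_INR).
  assert (Ec : forall y, cos (y/2) = cos (y/2 - 2*J*PI)).
  { intros y. unfold J. rewrite <- (cos_period (y/2 - 2*INR (S i)*PI) (S i)). f_equal; ring. }
  assert (Es : forall y, sin (y/2) = sin (y/2 - 2*J*PI)).
  { intros y. unfold J. rewrite <- (sin_period (y/2 - 2*INR (S i)*PI) (S i)). f_equal; ring. }
  assert (Hr1 : 0 <= y1/2 - 2*J*PI) by (rewrite HJ; nra).
  assert (Hr2 : y2/2 - 2*J*PI <= PI/2) by (rewrite HJ; nra).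
  set (c1 := cos (y1/2)). set (c2 := cos (y2/2)).
  set (H1' := cosh (s3*y1/2)). set (H2' := cosh (s3*y2/2)).
  assert (Pc1 : 0 < c1) by (apply root_cpos; auto).
  assert (Pc2 : 0 < c2) by (apply root_cpos; auto).
  assert (Hy1 : 11.6 <= y1) by nra.
  assert (HH1 : 16 <= H1').
  { assert (A := cosh_lb4 (s3*y1/2) ltac:(nra)). assert (10 <= s3*y1/2) by nra.
    assert (0 <= (s3*y1/2)*(s3*y1/2)*(s3*y1/2)*(s3*y1/2)/24).
    { assert (0 <= (s3*y1/2)*(s3*y1/2)) by nra. unfold Rdiv. 
      apply Rmult_le_pos; [|lra]. replace ((s3*y1*/2)*(s3*y1*/2)*(s3*y1*/2)*(s3*y1*/2)) with (((s3*y1*/2)*(s3*y1*/2))*((s3*y1*/2)*(s3*y1*/2))) by ring. nra. }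
    unfold H1'. nra. }
  assert (Hc1 : c1 <= 1/8).
  { unfold Gf in G1. fold c1 H1' in G1. nra. }
  assert (HH12 : H1' <= H2').
  { unfold H1', H2'. apply cosh_mono; nra. }
  destruct (mvt (fun y => cos (y/2)) (fun y => - (sin (y/2) / 2)) y1 y2 H12) as [xi [Hxi Exi]].
  { intros x _. auto_derive; auto. unfold Rdiv; ring. }
  fold c1 c2 in Exi.
  assert (Hsx : 1/2 <= sin (xi/2)).
  { rewrite Es. set (r := xi/2 - 2*J*PI).
    assert (Hr : 0 <= r <= PI/2) by (unfold r; rewrite HJ in *; nra).
    assert (S0 : 0 <= sin r) by (apply sin_ge_0; lra).
    assert (C0 : cos r <= c1).
    { unfold c1. rewrite Ec. apply cos_le_at; unfold r; rewrite ?HJ in *; nra. }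
    assert (C1 : 0 <= cos r) by (apply cos_ge_0; lra).
    assert (SC := sin2_cos2 r). unfold Rsqr in SC. nra. }
  destruct (mvt (fun y => cosh (s3*y/2)) (fun y => s3/2 * sinh (s3*y/2)) y1 y2 H12) as [xj [Hxj Exj]].
  { intros x _. unfold cosh, sinh. auto_derive; auto. unfold Rdiv; ring. }
  fold H1' H2' in Exj.
  assert (Hsj : s3/2 * sinh (s3*xj/2) <= H2').
  { assert (A := sinh_le_cosh (s3*xj/2)). assert (B := cosh_mono (s3*xj/2) (s3*y2/2) ltac:(nra) ltac:(nra)).
    assert (C := sinh_ge0 (s3*xj/2) ltac:(nra)). fold H2' in B. nra. }
  assert (D1 : c1 - c2 >= (y2 - y1)/4) by nra.
  assert (D2 : H2' - H1' <= H2' * (y2 - y1)) by nra.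
  unfold Gf in G1, G2. fold c1 H1' in G1. fold c2 H2' in G2.
  assert (E : (c2*c2 + H2'*c2 - 2) - (c1*c1 + H1'*c1 - 2) = (c2 - c1)*(c1 + c2 + H2') + c1*(H2' - H1')) by ring.
  assert (0 < y2 - y1) by lra.
  assert ((c2 - c1)*(c1 + c2 + H2') <= - (y2-y1)/4 * H2') by nra.
  assert (c1*(H2' - H1') <= (y2-y1)/8 * H2') by nra.
  nra.
Qed.

Lemma fall_unique i y1 y2 : (4*INR i + 4)*PI <= y1 <= (4*INR i + 5)*PI ->
  (4*INR i + 4)*PI <= y2 <= (4*INR i + 5)*PI -> Gf y1 = 0 -> Gf y2 = 0 -> y1 = y2.
Proof.
  intros A B C D. destruct (Rtotal_order y1 y2) as [H|[H|H]]; auto.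
  - exfalso. apply (fall_no2 i y1 y2); auto; lra.
  - exfalso. apply (fall_no2 i y2 y1); auto; lra.
Qed.

Lemma root_loc x : 0 < x -> Gf x = 0 -> exists i,
  ((4*INR i + 3)*PI <= x <= (4*INR i + 4)*PI) \/ ((4*INR i + 4)*PI <= x <= (4*INR i + 5)*PI).
Proof.
  intros Hx G. assert (Hc := root_cpos x G). assert (HP := PI_pos').
  assert (Hpi : PI <= x).
  { destruct (Rlt_or_le x PI) as [A|A]; auto. assert (B := Gf_neg_small x ltac:(lra)). lra. }
  set (r := (x/2 + PI)/(2*PI)).
  destruct (archimed r) as [A1 A2].
  set (z := (up r - 1)%Z).
  assert (Ez : IZR z = IZR (up r) - 1) by (unfold z; rewrite minus_IZR; reflexivity).
  assert (Hr : 0 < r) by (unfold r; apply Rdiv_lt_0_compat; lra).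
  assert (Hz0 : (0 <= z)%Z).
  { assert (-1 < IZR z) by lra. apply lt_IZR in H. lia. }
  set (j := Z.to_nat z).
  assert (Ej : INR j = IZR z) by (unfold j; rewrite INR_IZR_INZ, Z2Nat.id; auto).
  assert (Hlo : IZR z * (2*PI) <= x/2 + PI).
  { assert (IZR z <= r) by lra. unfold r in H.
    apply Rmult_le_compat_r with (r := 2*PI) in H; [|lra].
    replace ((x / 2 + PI) / (2 * PI) * (2 * PI)) with (x/2 + PI) in H by (field; lra). lra. }
  assert (Hhi : x/2 + PI < (IZR z + 1) * (2*PI)).
  { assert (r < IZR z + 1) by lra. unfold r in H.
    apply Rmult_lt_compat_r with (r := 2*PI) in H; [|lra].
    replace ((x / 2 + PI) / (2 * PI) * (2 * PI)) with (x/2 + PI) in H by (field; lra). lra. }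
  set (t := x/2 - 2*INR j*PI).
  assert (Ect : cos (x/2) = cos t).
  { unfold t. rewrite <- (cos_period (x/2 - 2*INR j*PI) j). f_equal; ring. }
  assert (Ht : -PI <= t < PI) by (unfold t; rewrite Ej; nra).
  assert (Ht2 : - (PI/2) < t < PI/2).
  { rewrite Ect in Hc. split.
    - destruct (Rlt_or_le (-(PI/2)) t) as [B|B]; auto.
      assert (cos (-t) <= 0) by (apply cos_le_0; lra). rewrite cos_neg in H. lra.
    - destruct (Rlt_or_le t (PI/2)) as [B|B]; auto.
      assert (cos t <= 0) by (apply cos_le_0; lra). lra. }
  destruct j as [|i] eqn:Hj.
  - exfalso. unfold t in Ht2. simpl in Ht2. lra.
  - exists i. unfold t in Ht2. rewrite S_INR in Ht2.
    destruct (Rle_lt_dec x ((4*INR i + 4)*PI)) as [B|B].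
    + left. split; nra.
    + right. split; nra.
Qed.

Lemma alg_equiv c H C : C = 2*H*H - 1 -> 1 < H -> c <= 1 ->
  (c = 4*H/C + /C*(c*(2*c*c-1) - 4*c) <-> c*c + H*c - 2 = 0).
Proof.
  intros HC HH Hc. assert (HCp : 0 < C) by nra. split.
  - intros E. assert (E2 : c * C = 4*H + (c*(2*c*c-1) - 4*c)).
    { rewrite E at 1. field. lra. }
    rewrite HC in E2.
    assert (E3 : (c - H) * (c*c + H*c - 2) = 0) by nra.
    apply Rmult_integral in E3. destruct E3; [lra|auto].
  - intros G. assert (E2 : c * C = 4*H + (c*(2*c*c-1) - 4*c)).
    { rewrite HC. assert (E3 : (c - H) * (c*c + H*c - 2) = 0) by (rewrite G; ring). nra. }
    apply (Rmult_eq_reg_r C); [|lra]. rewrite E2. field. lra.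
Qed.

Lemma odd_eq_iff x : 0 < x -> (odd_eq x <-> Gf x = 0).
Proof.
  intros Hx. unfold odd_eq, Gf.
  assert (E1 : x * sqrt 3 / 2 = s3*x/2) by (unfold s3; field).
  assert (E2 : cosh (x * sqrt 3) = 2 * cosh (s3*x/2) * cosh (s3*x/2) - 1).
  { unfold cosh. replace (x * sqrt 3) with (s3*x/2 + s3*x/2) by (unfold s3; field).
    rewrite !exp_plus. replace (- (s3 * x / 2 + s3 * x / 2)) with (-(s3*x/2) + -(s3*x/2)) by field.
    rewrite exp_plus. 
    assert (exp (s3*x/2) * exp (-(s3*x/2)) = 1) by (rewrite <- exp_plus; replace (s3 * x / 2 + - (s3 * x / 2)) with 0 by field; apply exp_0).
    field_simplify. nra. }
  assert (E3 : cos x = 2 * cos (x/2) * cos (x/2) - 1).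
  { replace x with (2*(x/2)) at 1 by field. rewrite cos_2a_cos. ring. }
  rewrite E1, E2, E3.
  assert (HH : 1 < cosh (s3*x/2)).
  { apply cosh_gt1. assert (H3 := s3_pos). assert (0 < s3*x/2) by nra. lra. }
  assert (Hc := COS_bound (x/2)).
  rewrite (alg_equiv (cos (x/2)) (cosh (s3*x/2)) (2 * cosh (s3*x/2) * cosh (s3*x/2) - 1)); try lra.
Qed.

Definition rootR i := proj1_sig (ex_rise i).
Definition rootF i := proj1_sig (ex_fall i).
Definition muOdd k := if Nat.even k then rootR (Nat.div2 k) else rootF (Nat.div2 k).
Definition mu n := if Nat.even n then INR n * PI else muOdd (Nat.div2 (n - 3)).

Lemma even_2 i : Nat.even (2*i) = true.
Proof. apply Nat.even_spec. exists i; reflexivity. Qed.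
Lemma even_2_1 i : Nat.even (2*i+1) = false.
Proof. apply Nat.even_odd. Qed.

Lemma muOdd_spec k : INR (2*k+2) * PI < muOdd k < INR (2*k+4) * PI /\ Gf (muOdd k) = 0.
Proof.
  assert (HP := PI_pos').
  destruct (Nat.Even_or_Odd k) as [[i Hi]|[i Hi]]; subst k.
  - unfold muOdd. rewrite even_2, Nat.div2_double. unfold rootR.
    destruct (ex_rise i) as [z [[A B] C]]. cbn [proj1_sig].
    rewrite !plus_INR, !mult_INR. replace (INR 2) with 2 by (simpl; ring). replace (INR 4) with 4 by (simpl; ring).
    split; auto. split; nra.
  - unfold muOdd. rewrite even_2_1. replace (2*i+1)%nat with (S (2*i)) by lia.
    rewrite Nat.div2_succ_double. unfold rootF.
    destruct (ex_fall i) as [z [[A B] C]]. cbn [proj1_sig].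
    replace (2 * S (2 * i) + 2)%nat with (4*i+4)%nat by lia.
    replace (2 * S (2 * i) + 4)%nat with (4*i+6)%nat by lia.
    rewrite !plus_INR, !mult_INR. replace (INR 4) with 4 by (simpl; ring). replace (INR 6) with 6 by (simpl; ring).
    split; auto. split; nra.
Qed.

Lemma mu_odd k : mu (2*k+3) = muOdd k.
Proof.
  unfold mu. replace (2*k+3)%nat with (2*(k+1)+1)%nat by lia. rewrite even_2_1.
  f_equal. replace (2*(k+1)+1-3)%nat with (2*k)%nat by lia. apply Nat.div2_double.
Qed.

Lemma mu_even j : mu (2*j) = INR (2*j) * PI.
Proof. unfold mu. rewrite even_2. reflexivity. Qed.

Lemma odd_all x : 0 < x -> Gf x = 0 -> exists k, x = muOdd k.
Proof.
  intros Hx G. destruct (root_loc x Hx G) as [i [H|H]].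
  - exists (2*i)%nat. unfold muOdd. rewrite even_2, Nat.div2_double. unfold rootR.
    destruct (ex_rise i) as [z [[A B] C]]. cbn [proj1_sig]. apply (rise_unique i); auto; lra.
  - exists (2*i+1)%nat. unfold muOdd. rewrite even_2_1. replace (2*i+1)%nat with (S (2*i)) by lia.
    rewrite Nat.div2_succ_double. unfold rootF.
    destruct (ex_fall i) as [z [[A B] C]]. cbn [proj1_sig]. apply (fall_unique i); auto; lra.
Qed.

Lemma INR_2j_pos j : (1 <= j)%nat -> 0 < INR (2*j).
Proof. intros. apply lt_0_INR. lia. Qed.

Theorem theorem2p2 :
  exists mu : nat -> R,
    (forall n : nat, (2 <= n)%nat -> Nat.Even n -> mu n = INR n * PI) /\
    (forall k : nat, 0 < mu (2 * k + 3)%nat) /\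
    (forall k : nat, mu (2 * k + 3)%nat < mu (2 * k + 5)%nat) /\
    (forall x : R, 0 < x -> (odd_eq x <-> exists k : nat, x = mu (2 * k + 3)%nat)) /\
    (forall n : nat, (2 <= n)%nat -> mu n < mu (S n)) /\
    (forall lam : R, is_eigenvalue6 lam <->
       exists n : nat, (2 <= n)%nat /\ lam = (mu n) ^ 6).
Proof.
  assert (HP := PI_pos').
  exists mu. split; [|split; [|split; [|split; [|split]]]].
  - intros n _ [j Hj]. subst n. apply mu_even.
  - intros k. rewrite mu_odd. destruct (muOdd_spec k) as [[A _] _].
    assert (0 < INR (2*k+2)) by (apply lt_0_INR; lia). nra.
  - intros k. replace (2*k+5)%nat with (2*(S k)+3)%nat by lia. rewrite !mu_odd.
    destruct (muOdd_spec k) as [[_ A] _]. destruct (muOdd_spec (S k)) as [[B _] _].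
    replace (2 * S k + 2)%nat with (2*k+4)%nat in B by lia. lra.
  - intros x Hx. rewrite odd_eq_iff by auto. split.
    + intros G. destruct (odd_all x Hx G) as [k Hk]. exists k. rewrite mu_odd. auto.
    + intros [k Hk]. rewrite mu_odd in Hk. subst x. apply muOdd_spec.
  - intros n Hn. destruct (Nat.Even_or_Odd n) as [[j Hj]|[j Hj]]; subst n.
    + rewrite mu_even. replace (S (2*j)) with (2*(j-1)+3)%nat by lia. rewrite mu_odd.
      destruct (muOdd_spec (j-1)) as [[A _] _]. replace (2*(j-1)+2)%nat with (2*j)%nat in A by lia. lra.
    + replace (2*j+1)%nat with (2*(j-1)+3)%nat by lia. rewrite mu_odd.
      replace (S (2*(j-1)+3)) with (2*(j+1))%nat by lia. rewrite mu_even.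
      destruct (muOdd_spec (j-1)) as [[_ A] _]. replace (2*(j-1)+4)%nat with (2*(j+1))%nat in A by lia. lra.
  - intros lam. split.
    + intros [u Hu]. destruct (eig_analysis lam u Hu) as [m [Hm [Hl [Hs|Hg]]]].
      * destruct (sin_eq_0_0 _ Hs) as [k Hk].
        assert (Hk0 : (0 < k)%Z).
        { apply lt_IZR. assert (0 < IZR k * PI) by lra. 
          destruct (Rlt_or_le 0 (IZR k)) as [A|A]; auto. nra. }
        exists (2 * Z.to_nat k)%nat. split; [lia|].
        rewrite mu_even. rewrite Hl. f_equal.
        rewrite mult_INR, (INR_IZR_INZ (Z.to_nat k)), Z2Nat.id by lia. simpl (INR 2). lra.
      * destruct (odd_all m Hm Hg) as [k Hk]. exists (2*k+3)%nat. split; [lia|].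
        rewrite mu_odd, <- Hk. auto.
    + intros [n [Hn Hl]]. subst lam. destruct (Nat.Even_or_Odd n) as [[j Hj]|[j Hj]]; subst n.
      * rewrite mu_even. assert (Hm : 0 < INR (2*j) * PI) by (assert (A := INR_2j_pos j ltac:(lia)); nra).
        assert (Hs : sin (INR (2*j) * PI / 2) = 0).
        { apply sin_eq_0_1. exists (Z.of_nat j). rewrite <- INR_IZR_INZ, mult_INR. simpl (INR 2). field. }
        destruct (bc_even _ Hm Hs) as [p [HB Hp]].
        apply (eig_construct _ p Hm HB). intros E. rewrite E in Hp. simpl in Hp. lra.
      * replace (2*j+1)%nat with (2*(j-1)+3)%nat by lia. rewrite mu_odd.
        destruct (muOdd_spec (j-1)) as [[A _] G].
        assert (Hm : 0 < muOdd (j-1)) by (assert (0 < INR (2*(j-1)+2)) by (apply lt_0_INR; lia); nra).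
        destruct (bc_odd _ Hm G) as [p [HB Hp]].
        apply (eig_construct _ p Hm HB). intros E. rewrite E in Hp. simpl in Hp. lra.
Qed.
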